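(* Suppose that for every $e\in E$ the restriction $p_e|_{K_{i(e)}}$ is Dini-continuous and that there exists $\delta>0$ with $p_e|_{K_{i(e)}}\ge\delta$ for all $e\in E$. Let $x_i\in K_i$ for all $1\le i\le N$ and $x\in K$. Then for every integer $m\le 0$ the measure $P^m_x$ is absolutely continuous with respect to $P^m_{x_1\dots x_N}$ on $(\Sigma,\mathcal{A}_m)$.
   Context: A contractive Markov system (CMS) with average contracting rate $0<a<1$ consists of: a finite directed multigraph $(V,E,i,t)$ with vertex set $V=\{1,\dots,N\}$, finite edge set $E$, and maps $i,t:E\to V$ giving the initial and terminal vertex of each edge; a complete metric space $(K,d)$ partitioned into non-empty Borel sets $K_1,\dots,K_N$; Borel measurable maps $w_e:K\to K$ ($e\in E$) with $w_e(K_{i(e)})\subset K_{t(e)}$; Borel measurable functions $p_e:K\to[0,\infty)$ with $\sum_{e\in E}p_e(x)=1$ for all $x\in K$ and $p_e=0$ on $K\setminus K_{i(e)}$; and such that $\sum_{e\in E}p_e(x)d(w_ex,w_ey)\leq a\,d(x,y)$ for all $x,y\in K_j$, $j=1,\dots,N$. A function $f:(X,d)\to\mathbb{R}$ is Dini-continuous if $\int_0^c\frac{\phi(t)}{t}dt<\infty$ for some $c>0$, where $\phi(t):=\sup\{|f(x)-f(y)|:d(x,y)\le t,\ x,y\in X\}$ is its modulus of uniform continuity. Let $\Sigma:=E^{\mathbb{Z}}$. For $m\le n$ the cylinder $_m[e_m,\dots,e_n]:=\{\sigma\in\Sigma:\sigma_j=e_j,\ m\le j\le n\}$. For an integer $m\le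 1$, $\mathcal{A}_m$ is the $\sigma$-algebra generated by the cylinders $_m[e_m,\dots,e_n]$, $n\ge m$. For $x\in K$, $P^m_x$ is the probability measure on $(\Sigma,\mathcal{A}_m)$ with $P^m_x(_m[e_m,\dots,e_n])=p_{e_m}(x)\,p_{e_{m+1}}(w_{e_m}x)\cdots p_{e_n}(w_{e_{n-1}}\circ\cdots\circ w_{e_m}x)$. For fixed $x_i\in K_i$, $P^m_{x_1\dots x_N}:=\int P^m_y\,d\big(\frac1N\sum_{i=1}^N\delta_{x_i}\big)(y)=\frac1N\sum_{i=1}^N P^m_{x_i}$. *)

(* Defs.v *)
From HB Require Import structures.
From mathcomp Require Import all_boot all_order all_algebra.
From mathcomp Require Import all_classical all_reals all_analysis.
Set Implicit Arguments. Unset Strict Implicit. Unset Printing Implicit Defensive.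
Import Order.TTheory GRing.Theory Num.Theory.
Local Open Scope classical_set_scope.
Local Open Scope ring_scope.

Section CMSDefs.
Variable R : realType.

Definition metric_axioms {K : Type} (d : K -> K -> R) : Prop :=
  [/\ forall x y, 0 <= d x y,
      forall x y, d x y = 0 <-> x = y,
      forall x y, d x y = d y x &
      forall x y z, d x z <= d x y + d y z].

Definition cauchy_seq {K : Type} (d : K -> K -> R) (u : nat -> K) : Prop :=
  forall eps, 0 < eps -> exists N0 : nat,
    forall n k, (N0 <= n)%N -> (N0 <= k)%N -> d (u n) (u k) < eps.

Definition d_converges {K : Type} (d : K -> K -> R) (u : nat -> K) (l : K) : Prop :=
  forall eps, 0 < eps -> exists N0 : nat, forall n, (N0 <= n)%N -> d (u n) l < eps.

Definition complete_metric {K : Type} (d : K -> K -> R) : Prop :=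
  metric_axioms d /\ forall u, cauchy_seq d u -> exists l, d_converges d u l.

Definition d_open {K : Type} (d : K -> K -> R) (U : set K) : Prop :=
  forall x, U x -> exists r, 0 < r /\ [set y | d x y < r] `<=` U.

Definition d_borel {K : Type} (d : K -> K -> R) : set (set K) :=
  <<s setT, d_open d >>.

Definition borel_map {K : Type} (d : K -> K -> R) (f : K -> K) : Prop :=
  forall B, d_borel d B -> d_borel d (f @^-1` B).

Definition borel_rfun {K : Type} (d : K -> K -> R) (f : K -> R) : Prop :=
  forall B : set R, measurable B -> d_borel d (f @^-1` B).

(* vertices V = 'I_N (i.e. {1,...,N}), edges E a finite type,
   ini/ter = the maps i, t : E -> V, Kp i = K_i, w e = w_e, p e = p_e *)
Definition is_CMS (N : nat) (E : finType) (ini ter : E -> 'I_N)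
  (K : Type) (d : K -> K -> R) (Kp : 'I_N -> set K)
  (w : E -> K -> K) (p : E -> K -> R) (a : R) : Prop :=
  [/\ complete_metric d,
      [/\ forall i, Kp i !=set0,
          forall i j, i != j -> Kp i `&` Kp j = set0,
          forall x, exists i, Kp i x &
          forall i, d_borel d (Kp i)],
      (forall e, borel_map d (w e)) /\ (forall e, w e @` Kp (ini e) `<=` Kp (ter e)),
      [/\ forall e, borel_rfun d (p e),
          forall e x, 0 <= p e x,
          forall x, \sum_(e : E) p e x = 1 &
          forall e x, ~ Kp (ini e) x -> p e x = 0] &
      0 < a < 1 /\
      (forall j x y, Kp j x -> Kp j y ->
         \sum_(e : E) p e x * d (w e x) (w e y) <= a * d x y)].

Definition modulus {K : Type} (d : K -> K -> R) (A : set K) (f : K -> R) (t : R)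
  : \bar R :=
  ereal_sup [set r | exists x y, [/\ A x, A y, d x y <= t & r = (`|f x - f y|)%:E]].

Definition dini_continuous {K : Type} (d : K -> K -> R) (A : set K) (f : K -> R)
  : Prop :=
  exists c : R, 0 < c /\
    (\int[@lebesgue_measure R]_(t in `]0%R, c]%classic) (modulus d A f t * (t^-1)%:E) < +oo)%E.

Definition Sigma (E : Type) := int -> E.

(* the cylinder _m[e_m, ..., e_n] with s = [:: e_m; ...; e_n] *)
Definition cyl {E : Type} (m : int) (s : seq E) : set (Sigma E) :=
  [set sg | forall k : nat, (k < size s)%N -> sg (m + k%:Z) = nth (sg (m + k%:Z)) s k].

Definition cylinders {E : Type} (m : int) : set (set (Sigma E)) :=
  [set A | exists s : seq E, (0 < size s)%N /\ A = cyl m s].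

Definition A_sigma {E : Type} (m : int) : set (set (Sigma E)) :=
  <<s setT, @cylinders E m >>.

(* p_{e_m}(x) p_{e_{m+1}}(w_{e_m} x) ... p_{e_n}(w_{e_{n-1}} o ... o w_{e_m} x) *)
Fixpoint cylP {E K : Type} (w : E -> K -> K) (p : E -> K -> R) (x : K) (s : seq E)
  : R :=
  match s with
  | [::] => 1
  | e :: s' => p e x * cylP w p (w e x) s'
  end.

Definition is_probability_on {T : Type} (S : set (set T)) (mu : set T -> \bar R)
  : Prop :=
  [/\ mu set0 = 0%E,
      forall A, S A -> (0 <= mu A)%E,
      mu setT = 1%E &
      forall F : nat -> set T, (forall n, S (F n)) -> trivIset setT F ->
        (fun n => \sum_(0 <= i < n) mu (F i))%E @ \oo --> mu (\bigcup_n F n)].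

Definition abs_continuous_on {T : Type} (S : set (set T)) (mu nu : set T -> \bar R)
  : Prop :=
  forall A, S A -> nu A = 0%E -> mu A = 0%E.

End CMSDefs.

(* Main.v *)
Require Import Defs.
From HB Require Import structures.
From mathcomp Require Import all_boot all_order all_algebra.
From mathcomp Require Import all_classical all_reals all_analysis.
From mathcomp Require Import lra ring.
Import Order.TTheory GRing.Theory Num.Theory.
Local Open Scope classical_set_scope.
Local Open Scope ring_scope.

Definition ST (E : finType) (e0 : E) := Sigma E.
HB.instance Definition _ (E : finType) (e0 : E) := Choice.copy (ST E e0) (int -> E).
HB.instance Definition _ (E : finType) (e0 : E) := isPointed.Build (@ST E e0) (fun _ => e0).
Notation MT E e0 m := (@g_sigma_algebraType (@ST E e0) (@cylinders E m)).

Definition mu' (R : realType) (E : finType) (e0 : E) (m : int) (mu : set (Sigma E) -> \bar R)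
  (H : is_probability_on (A_sigma m) mu) : set (MT E e0 m) -> \bar R :=
  fun A => if pselect (A_sigma m A) then mu A else 0%E.
Arguments mu' {R E} e0 {m mu} H.

Section S.
Variables (R : realType) (E : finType) (e0 : E) (m : int) (mu : set (Sigma E) -> \bar R)
  (H : is_probability_on (A_sigma m) mu).
Lemma mu'E A : A_sigma m A -> mu' e0 H A = mu A.
Proof. by rewrite /mu'; case: pselect. Qed.
Lemma mu'0 : mu' e0 H set0 = 0%E.
Proof. by rewrite /mu'; case: pselect => // ?; case: H. Qed.
Lemma mu'ge0 A : (0 <= mu' e0 H A)%E.
Proof. by rewrite /mu'; case: pselect => // hA; case: H => _ + _ _; apply. Qed.
Lemma mu'sa : semi_sigma_additive (mu' e0 H).
Proof.
move=> F mF tF mU.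
rewrite mu'E //.
have -> : (fun n => (\sum_(0 <= i < n) mu' e0 H (F i))%E) = (fun n => (\sum_(0 <= i < n) mu (F i))%E).
  by apply: funext => n; apply: eq_bigr => i _; rewrite mu'E //; apply: mF.
by case: H => _ _ _; apply.
Qed.
End S.
HB.instance Definition _ R E e0 m mu H := isMeasure.Build _ _ _ (@mu' R E e0 m mu H) (@mu'0 R E e0 m mu H) (@mu'ge0 R E e0 m mu H) (@mu'sa R E e0 m mu H).

Lemma abscont_gen (R : realType) (E : finType) (e0 : E) (m : int)
  (mu nu : set (Sigma E) -> \bar R)
  (Hmu : is_probability_on (A_sigma m) mu) (Hnu : is_probability_on (A_sigma m) nu)
  (Alg : set (set (Sigma E))) :
  setring Alg -> Alg setT -> (@cylinders E m) `<=` Alg -> Alg `<=` A_sigma m ->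
  (forall eps : R, 0 < eps -> exists C : R, 0 <= C /\
     forall A, Alg A -> (mu A <= C%:E * nu A + eps%:E)%E) ->
  forall A, A_sigma m A -> nu A = 0%E -> mu A = 0%E.
Proof.
move=> ringA AT cylA AS Heps A SA nuA0.
pose MU := (mu' e0 Hmu : {measure set (MT E e0 m) -> \bar R}).
pose NU := (mu' e0 Hnu : {measure set (MT E e0 m) -> \bar R}).
have MUE (B : set (Sigma E)) : A_sigma m B -> MU B = mu B by apply: mu'E.
have NUE (B : set (Sigma E)) : A_sigma m B -> NU B = nu B by apply: mu'E.
have key : forall eps : R, 0 < eps -> (mu A <= eps%:E)%E.
  move=> eps eps0; have [C [C0 HC]] := Heps eps eps0.
  pose G := [set B : set (Sigma E) | A_sigma m B /\ (mu B <= C%:E * nu B + eps%:E)%E].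
  have mG : monotone G.
    split.
    - move=> F ndF GF.
      have mF : forall i, measurable (F i : set (MT E e0 m)) by move=> i; exact: (GF i).1.
      have mU : measurable (\bigcup_n F n : set (MT E e0 m)) by exact: bigcupT_measurable.
      split => //.
      have cm := nondecreasing_cvg_mu (mu := MU) mF mU ndF.
      rewrite -MUE // -NUE //.
      apply: (cvge_to_le cm); apply: nearW => n /=.
      rewrite MUE; last exact: mF.
      apply: le_trans (GF n).2 _.
      rewrite -NUE; last exact: mF.
      rewrite leeD2r // lee_wpmul2l // ?lee_fin //.
      apply: le_measure; rewrite ?inE //; last exact: bigcup_sup.
    - move=> F niF GF.
      have mF : forall i, measurable (F i : set (MT E e0 m)) by move=> i; exact: (GF i).1.
      have mI : measurable (\bigcap_n F n : set (MT E e0 m)) by exact: bigcapT_measurable.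
      split => //.
      have fin0 : (NU (F 0%N) < +oo)%E.
        apply: (@le_lt_trans _ _ (NU setT)); first by apply: le_measure; rewrite ?inE.
        by rewrite NUE //; [have [_ _ -> _] := Hnu; rewrite ltry | exact: (@measurableT _ (MT E e0 m))].
      have cn := nonincreasing_cvg_mu fin0 mF mI niF.
      have cg : (fun n => C%:E * NU (F n) + eps%:E)%E @ \oo --> (C%:E * NU (\bigcap_n F n) + eps%:E)%E.
        apply: cvgeD; last exact: cvg_cst.
          rewrite fin_num_adde_defl //.
        exact: cvgeZl.
      rewrite -MUE // -NUE //.
      apply: (cvge_to_ge cg); apply: nearW => n /=.
      rewrite NUE; last exact: mF.
      apply: le_trans (GF n).2.
      rewrite -!MUE //; last exact: mF.
      apply: le_measure; rewrite ?inE //; last exact: bigcap_inf.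
  have sub : <<sr Alg>> `<=` G.
    apply: monotone_setring_sub_g_sigma_ring => // B AB; split; first exact: AS.
    exact: HC.
  have sub2 : A_sigma m `<=` <<sr Alg>>.
    apply: smallest_sub; last by move=> B cB; apply: sub_gen_smallest; exact: cylA.
    have [s0 sD sU] := smallest_sigma_ring Alg.
    split => //.
    move=> B hB; apply: sD => //; exact: sub_gen_smallest.
  have := (sub A (sub2 A SA)).2.
  by rewrite nuA0 mule0 add0e.
apply/eqP; rewrite eq_le; apply/andP; split; last by have [_ + _ _] := Hmu; apply.
apply/lee_addgt0Pr => eps eps0; rewrite add0e; exact: key.
Qed.

Set Implicit Arguments. Unset Strict Implicit.

Section Comb.
Variables (E : finType) (m : int).

Definition word (σ : Sigma E) (n : nat) : seq E := [seq σ (m + (k%:Z)) | k <- iota 0 n].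
Definition U (n : nat) (Q : pred (seq E)) : set (Sigma E) := [set σ | Q (word σ n)].
Definition Alg : set (set (Sigma E)) := [set A | exists n Q, (0 < n)%N /\ A = U n Q].

Lemma size_word σ n : size (word σ n) = n.
Proof. by rewrite size_map size_iota. Qed.

Lemma take_word σ n N : (n <= N)%N -> take n (word σ N) = word σ n.
Proof. by move=> h; rewrite /word -map_take take_iota (minn_idPl h). Qed.

Lemma U_lift n N Q : (n <= N)%N -> U n Q = U N (fun s => Q (take n s)).
Proof. by move=> h; apply/seteqP; split => σ; rewrite /U /= take_word. Qed.

Lemma cyl_word σ s : cyl m s σ <-> word σ (size s) = s.
Proof.
split.
- move=> h; apply: (@eq_from_nth _ (σ m)); rewrite ?size_word // => k hk.
  rewrite /word (nth_map 0%N) ?size_iota // nth_iota // add0n (h k hk).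
  exact: set_nth_default.
- move=> h k hk.
  have := congr1 (fun t => nth (σ (m + k%:Z)) t k) h.
  by rewrite /= /word (nth_map 0%N) ?size_iota ?nth_iota //= add0n.
Qed.

Lemma setring_Alg : setring Alg.
Proof.
split.
- exists 1%N, xpred0; split => //; apply/seteqP; split => σ //.
- move=> A B [n [Q [n0 ->]]] [n' [Q' [n0' ->]]].
  exists (maxn n n'), (fun s => Q (take n s) || Q' (take n' s)); split.
    by rewrite leq_max n0.
  rewrite (@U_lift n (maxn n n') Q (leq_maxl n n')) (@U_lift n' (maxn n n') Q' (leq_maxr n n')).
  apply/seteqP; split => σ; rewrite /U /=.
    by case=> /= ->; rewrite ?orbT.
  by case/orP; [left|right].
- move=> A B [n [Q [n0 ->]]] [n' [Q' [n0' ->]]].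
  exists (maxn n n'), (fun s => Q (take n s) && ~~ Q' (take n' s)); split.
    by rewrite leq_max n0.
  rewrite (@U_lift n (maxn n n') Q (leq_maxl n n')) (@U_lift n' (maxn n n') Q' (leq_maxr n n')).
  apply/seteqP; split => σ; rewrite /U /=.
    by case=> /= -> /negP ->.
  by case/andP => -> /negP.
Qed.

Lemma AlgT : Alg setT.
Proof. by exists 1%N, xpredT; split => //; apply/seteqP; split. Qed.

Lemma cyl_Alg : @cylinders E m `<=` Alg.
Proof.
move=> A [s [s0 ->]]; exists (size s), (fun t => t == s); split => //.
apply/seteqP; split => σ; rewrite /U /=.
  by move/cyl_word => ->.
by move/eqP/cyl_word.
Qed.

Fixpoint paths (n : nat) : seq (seq E) :=
  if n is n'.+1 then [seq e :: t | e <- index_enum E, t <- paths n'] else [:: [::]].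

Lemma mem_paths n s : (s \in paths n) = (size s == n).
Proof.
elim: n s => [|n IH] [|e s] //=.
- apply/negbTE; apply/allpairsP => -[[e' t] [_ _ //]].
- rewrite eqSS -IH; apply/allpairsP/idP => [[[e' t] [/= _ ht [_ hst]]] | hs].
    by rewrite hst.
  by exists (e, s); split => //; rewrite mem_index_enum.
Qed.

Lemma uniq_paths n : uniq (paths n).
Proof.
elim: n => //= n IH; apply: allpairs_uniq => //; first exact: index_enum_uniq.
by move=> [e1 t1] [e2 t2] _ _ /= [-> ->].
Qed.

Lemma U_big n Q : U n Q = \big[setU/set0]_(s <- paths n | Q s) cyl m s.
Proof.
rewrite -bigcup_seq_cond; apply/seteqP; split => σ; rewrite /U /=.
- move=> hQ; exists (word σ n) => /=.
    by rewrite mem_paths size_word eqxx hQ.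
  by apply/cyl_word; rewrite size_word.
- move=> [s /andP[hs hQ] /cyl_word]; move: hs; rewrite mem_paths => /eqP ->.
  by move=> ->.
Qed.

Lemma cyl_paths_meas n s : (0 < n)%N -> s \in paths n -> A_sigma m (cyl m s).
Proof.
move=> n0 hs; apply: sub_gen_smallest; exists s; split => //.
by move: hs; rewrite mem_paths => /eqP ->.
Qed.

Lemma Alg_sub (e0 : E) : Alg `<=` A_sigma m.
Proof.
move=> A [n [Q [n0 ->]]]; rewrite U_big big_seq_cond.
apply: (@bigsetU_measurable _ (MT E e0 m)) => s /andP[hs _].
exact: (cyl_paths_meas n0 hs).
Qed.

Lemma cyl_disj n (s t : seq E) (σ : Sigma E) : size s = n -> size t = n -> cyl m s σ -> cyl m t σ -> s = t.
Proof. by move=> hs ht /cyl_word h1 /cyl_word h2; rewrite -h1 -h2 hs ht. Qed.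

Lemma P_U (R : realType) (e0 : E) (mu : set (Sigma E) -> \bar R)
  (Hmu : is_probability_on (A_sigma m) mu) n Q : (0 < n)%N ->
  mu (U n Q) = (\sum_(s <- paths n | Q s) mu (cyl m s))%E.
Proof.
move=> n0.
pose MU := (mu' e0 Hmu : {measure set (MT E e0 m) -> \bar R}).
have MUE (B : set (Sigma E)) : A_sigma m B -> MU B = mu B by apply: mu'E.
rewrite -MUE; last by apply: (Alg_sub e0); exists n, Q.
rewrite U_big.
have hsz : forall s, s \in paths n -> size s = n by move=> s; rewrite mem_paths => /eqP.
have gen : forall r, uniq r -> (forall s, s \in r -> s \in paths n) ->
    MU (\big[setU/set0]_(s <- r | Q s) cyl m s) = (\sum_(s <- r | Q s) mu (cyl m s))%E.
  elim => [|s r IH]; first by rewrite !big_nil measure0.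
  move=> /= /andP[sr ur] sub; rewrite !big_cons.
  have sub' : forall t, t \in r -> t \in paths n by move=> t ht; apply: sub; rewrite inE ht orbT.
  have ss : s \in paths n by apply: sub; rewrite inE eqxx.
  case: ifP => hQ; last exact: IH.
  rewrite measureU.
  - rewrite -IH // -(MUE (cyl m s)) //; exact: (cyl_paths_meas n0).
  - exact: (cyl_paths_meas n0).
  - rewrite big_seq_cond; apply: (@bigsetU_measurable _ (MT E e0 m)) => t /andP[ht _].
    by apply: (cyl_paths_meas n0); apply: sub'.
  - apply/seteqP; split => σ // [h1]; rewrite -bigcup_seq_cond => -[t /andP[tr _] h2].
    have st : s = t by apply: (cyl_disj (hsz s ss) (hsz t (sub' t tr)) h1 h2).
    by move: sr; rewrite st tr.
exact: gen (uniq_paths n) (fun _ h => h).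
Qed.
End Comb.


Section Walk.
Variables (R : realType) (N : nat) (E : finType) (ini ter : E -> 'I_N)
  (K : Type) (d : K -> K -> R) (Kp : 'I_N -> set K)
  (w : E -> K -> K) (p : E -> K -> R) (a : R).
Hypothesis HC : is_CMS ini ter d Kp w p a.

Fixpoint Ex (n : nat) (z : K) (f : seq E -> R) : R :=
  if n is n'.+1 then \sum_(e : E) p e z * Ex n' (w e z) (fun s => f (e :: s)) else f [::].

Lemma p_ge0 e z : 0 <= p e z.
Proof. by case: HC => _ _ _ [_ h _ _] _; apply: h. Qed.
Lemma p_sum z : \sum_(e : E) p e z = 1.
Proof. by case: HC => _ _ _ [_ _ h _] _; apply: h. Qed.
Lemma p_out e z : ~ Kp (ini e) z -> p e z = 0.
Proof. by case: HC => _ _ _ [_ _ _ h] _; apply: h. Qed.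
Lemma p_le1 e z : p e z <= 1.
Proof.
rewrite -(p_sum z) (bigD1 e) //= lerDl sumr_ge0 // => *; exact: p_ge0.
Qed.
Lemma w_map e z : Kp (ini e) z -> Kp (ter e) (w e z).
Proof. by case: HC => _ _ [_ h] _ _ hz; apply: h; exists z. Qed.
Lemma disj i j z : Kp i z -> Kp j z -> i = j.
Proof.
case: HC => _ [_ h _ _] _ _ _ hi hj; apply/eqP; apply/negPn/negP => hne.
have : (Kp i `&` Kp j) z by split.
by rewrite h.
Qed.
Lemma contr j x y : Kp j x -> Kp j y -> \sum_(e : E) p e x * d (w e x) (w e y) <= a * d x y.
Proof. by case: HC => _ _ _ _ [_ h]; apply: h. Qed.
Lemma d_ge0 x y : 0 <= d x y.
Proof. by case: HC => [[[h _ _ _] _] _ _ _ _]. Qed.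
Lemma d_xx x : d x x = 0.
Proof. by case: HC => [[[_ h _ _] _] _ _ _ _]; apply/h. Qed.
Lemma a_ge0 : 0 <= a.
Proof. by case: HC => _ _ _ _ [/andP[h _] _]; apply: ltW. Qed.
Lemma Kne i : Kp i !=set0.
Proof. by case: HC => _ [h _ _ _] _ _ _. Qed.

Lemma Ex_le n z f g : (forall s, f s <= g s) -> Ex n z f <= Ex n z g.
Proof.
elim: n z f g => [|n IH] z f g h //=.
apply: ler_sum => e _; apply: ler_wpM2l; first exact: p_ge0.
by apply: IH => s; apply: h.
Qed.

Lemma Ex_ge0 n z f : (forall s, 0 <= f s) -> 0 <= Ex n z f.
Proof.
elim: n z f => [|n IH] z f h //=.
apply: sumr_ge0 => e _; apply: mulr_ge0; first exact: p_ge0.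
by apply: IH => s; apply: h.
Qed.

Lemma Ex_cst n z c : Ex n z (fun _ => c) = c.
Proof.
elim: n z => //= n IH z.
under eq_bigr => e _ do rewrite IH.
by rewrite -mulr_suml p_sum mul1r.
Qed.

Lemma ExD n z f g : Ex n z (fun s => f s + g s) = Ex n z f + Ex n z g.
Proof.
elim: n z f g => //= n IH z f g.
rewrite -big_split /=; apply: eq_bigr => e _.
by rewrite IH mulrDr.
Qed.

Lemma ExZ n z c f : Ex n z (fun s => c * f s) = c * Ex n z f.
Proof.
elim: n z f => //= n IH z f.
rewrite mulr_sumr; apply: eq_bigr => e _.
by rewrite IH mulrCA.
Qed.

Fixpoint V (δ : R) (x y : K) (s : seq E) : R :=
  if s is e :: s' then `|p e x - p e y| / δ + V δ (w e x) (w e y) s' else 0.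

Lemma V_ge0 δ x y s : 0 < δ -> 0 <= V δ x y s.
Proof.
move=> dp; elim: s x y => //= e s IH x y.
by apply: addr_ge0 => //; apply: divr_ge0 => //; apply: ltW.
Qed.

Lemma expR_ge1 (L : R) : 0 <= L -> 1 <= expR L.
Proof. by move=> hL; apply: le_trans (expR_ge1Dx L); rewrite lerDl. Qed.

Lemma ratio δ (dpos : 0 < δ) (hδ : forall e z, Kp (ini e) z -> δ <= p e z) n :
  forall j x y (L : R) (g : seq E -> R), Kp j x -> Kp j y -> (forall s, 0 <= g s) ->
  Ex n x (fun s => ((V δ x y s <= L)%R)%:R * g s) <= expR L * Ex n y g.
Proof.
elim: n => [|n IH] j x y L g hx hy g0 /=.
  case: (leP 0 L) => hL; last by rewrite mul0r mulr_ge0 // expR_ge0.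
  by rewrite mul1r ler_peMl // expR_ge1.
rewrite mulr_sumr; apply: ler_sum => e _.
have gey : 0 <= Ex n (w e y) (fun s => g (e :: s)) by apply: Ex_ge0.
case: (pselect (Kp (ini e) x)) => hex; last first.
  by rewrite p_out // mul0r mulr_ge0 ?expR_ge0 // mulr_ge0 // p_ge0.
have jE : j = ini e by apply: (disj hx hex).
have hey : Kp (ini e) y by rewrite -jE.
set u := `|p e x - p e y| / δ.
have eq1 : (fun s => (((u + V δ (w e x) (w e y) s <= L)%R)%:R * g (e :: s)))
         = (fun s => (((V δ (w e x) (w e y) s <= L - u)%R)%:R * g (e :: s))).
  by apply: funext => s; rewrite lerBrDl.
rewrite eq1.
apply: le_trans (ler_wpM2l (p_ge0 e x) (IH (ter e) _ _ (L - u) _ (w_map hex) (w_map hey) (fun s => g0 _))) _.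
rewrite !mulrA; apply: ler_wpM2r => //.
have u0 : 0 <= u by apply: divr_ge0 => //; apply: ltW.
have hpy := hδ e y hey.
have key : p e x <= p e y * expR u.
  have h1 : p e x <= p e y + `|p e x - p e y|.
    by rewrite -lerBlDl; apply: ler_norm.
  have h2 : `|p e x - p e y| = δ * u by rewrite /u mulrC divfK // gt_eqF.
  have h3 := expR_ge1Dx u.
  have h4 := p_ge0 e y.
  nra.
rewrite [L - u]addrC expRD expRN.
have eu := expR_gt0 u.
have hinv : p e x * (expR u)^-1 <= p e y.
  by rewrite ler_pdivrMr.
have eL := expR_gt0 L.
nra.
Qed.

Definition phi e t := fine (modulus d (Kp (ini e)) (p e) t).
Definition Phi t := \sum_(e : E) phi e t.

Lemma mod_le1 e t : (modulus d (Kp (ini e)) (p e) t <= 1)%E.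
Proof.
apply: ge_ereal_sup => _ [x [y [hx hy _ ->]]]; rewrite lee_fin ler_norml.
have := p_ge0 e x; have := p_ge0 e y; have := p_le1 e x; have := p_le1 e y.
move=> *; apply/andP; split; lra.
Qed.

Lemma mod_ge_pair e t x y : Kp (ini e) x -> Kp (ini e) y -> d x y <= t ->
  (`|p e x - p e y|%:E <= modulus d (Kp (ini e)) (p e) t)%E.
Proof. by move=> hx hy hd; apply: ereal_sup_ubound; exists x, y; split. Qed.

Lemma mod_ge0 e t : 0 <= t -> (0 <= modulus d (Kp (ini e)) (p e) t)%E.
Proof.
move=> t0; have [x hx] := Kne (ini e).
by have := mod_ge_pair hx hx (t := t); rewrite d_xx subrr normr0; apply.
Qed.

Lemma mod_fin e t : 0 <= t -> modulus d (Kp (ini e)) (p e) t \is a fin_num.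
Proof.
move=> t0; rewrite ge0_fin_numE ?mod_ge0 //.
by apply: le_lt_trans (mod_le1 e t) _; rewrite ltry.
Qed.

Lemma phi_ge0 e t : 0 <= t -> 0 <= phi e t.
Proof. by move=> t0; rewrite -lee_fin /phi fineK ?mod_ge0 ?mod_fin. Qed.

Lemma phi_le1 e t : 0 <= t -> phi e t <= 1.
Proof. by move=> t0; rewrite -lee_fin /phi fineK ?mod_le1 ?mod_fin. Qed.

Lemma mod_mono e t1 t2 : t1 <= t2 ->
  (modulus d (Kp (ini e)) (p e) t1 <= modulus d (Kp (ini e)) (p e) t2)%E.
Proof.
move=> h; apply: ereal_sup_le => _ [x [y [hx hy hd ->]]].
by exists x, y; split => //; apply: le_trans h.
Qed.

Lemma phi_mono e t1 t2 : 0 <= t1 -> t1 <= t2 -> phi e t1 <= phi e t2.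
Proof.
move=> t0 h; rewrite -lee_fin /phi !fineK ?mod_fin //; last exact: le_trans h.
exact: mod_mono.
Qed.

Lemma phi_Phi e t : 0 <= t -> phi e t <= Phi t.
Proof.
move=> t0; rewrite /Phi (bigD1 e) //= lerDl sumr_ge0 // => *; exact: phi_ge0.
Qed.

Lemma dp_bound e t x y : 0 < t -> Kp (ini e) x -> Kp (ini e) y ->
  `|p e x - p e y| <= Phi t + d x y / t.
Proof.
move=> t0 hx hy.
have P1 := phi_Phi e (ltW t0).
have P0 := phi_ge0 e (ltW t0).
have dt : 0 <= d x y / t by apply: divr_ge0 => //; [exact: d_ge0 | exact: ltW].
case: (leP (d x y) t) => h.
  have := mod_ge_pair hx hy h; rewrite -(fineK (mod_fin e (ltW t0))) lee_fin => h1.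
  by apply: le_trans h1 _; rewrite /phi in P1; lra.
have h1 : 1 <= d x y / t by rewrite ler_pdivlMr // mul1r ltW.
have : `|p e x - p e y| <= 1.
  rewrite ler_norml; have := p_ge0 e x; have := p_ge0 e y; have := p_le1 e x; have := p_le1 e y.
  by move=> *; apply/andP; split; lra.
lra.
Qed.

Lemma Vbound δ (dpos : 0 < δ) n : forall j x y (τ : nat -> R), Kp j x -> Kp j y ->
  (forall k, 0 < τ k) ->
  δ * Ex n x (V δ x y) <= \sum_(k < n) Phi (τ k) + d x y * \sum_(k < n) (a ^+ k / τ k).
Proof.
elim: n => [|n IH] j x y τ hx hy hτ /=.
  by rewrite !big_ord0 !mulr0 addr0.
have eqV : forall e, Ex n (w e x) (fun s => V δ x y (e :: s)) =
    `|p e x - p e y| / δ + Ex n (w e x) (V δ (w e x) (w e y)).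
  by move=> e /=; rewrite (ExD n (w e x) (fun _ => `|p e x - p e y| / δ) (V δ (w e x) (w e y))) Ex_cst.
set S := \sum_(k < n) (a ^+ k / τ k.+1).
set B := \sum_(k < n) Phi (τ k.+1).
have S0 : 0 <= S.
  by apply: sumr_ge0 => k _; apply: divr_ge0; [exact: exprn_ge0 a_ge0 | exact: ltW].
have step : forall e, δ * (p e x * Ex n (w e x) (fun s => V δ x y (e :: s))) <=
    p e x * (Phi (τ 0%N) + d x y / τ 0%N + B + d (w e x) (w e y) * S).
  move=> e; case: (pselect (Kp (ini e) x)) => hex; last by rewrite p_out // !mul0r mulr0.
  have jE : j = ini e by apply: (disj hx hex).
  have hey : Kp (ini e) y by rewrite -jE.
  rewrite eqV mulrCA; apply: ler_wpM2l; first exact: p_ge0.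
  rewrite mulrDr (mulrC δ (_ / δ)) divfK ?gt_eqF //.
  have h1 := dp_bound (hτ 0%N) hex hey.
  have h2 := IH (ter e) _ _ (fun k => τ k.+1) (w_map hex) (w_map hey) (fun k => hτ k.+1).
  rewrite /= -/S -/B in h2.
  lra.
rewrite mulr_sumr.
apply: le_trans (ler_sum _ (fun e _ => step e)) _.
rewrite (eq_bigr (fun e => (Phi (τ 0%N) + d x y / τ 0%N + B) * p e x +
    S * (p e x * d (w e x) (w e y)))); last by move=> e _; ring.
rewrite big_split /= -mulr_sumr -mulr_sumr p_sum mulr1.
have hc := contr hx hy.
rewrite !big_ord_recl /= expr0 mul1r.
have -> : \sum_(i < n) Phi (τ (lift ord0 i)) = B by apply: eq_bigr => i _; rewrite lift0.
have -> : \sum_(i < n) (a ^+ (lift ord0 i) / τ (lift ord0 i)) = a * S.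
  by rewrite /S mulr_sumr; apply: eq_bigr => i _; rewrite lift0 exprS mulrA.
nra.
Qed.

Lemma main_bound δ (dpos : 0 < δ) (hδ : forall e z, Kp (ini e) z -> δ <= p e z)
  n j x y (L : R) (Q : pred (seq E)) : Kp j x -> Kp j y -> 0 < L ->
  Ex n x (fun s => (Q s)%:R) <= expR L * Ex n y (fun s => (Q s)%:R) + Ex n x (V δ x y) / L.
Proof.
move=> hx hy L0.
apply: le_trans (@Ex_le n x _ (fun s => ((V δ x y s <= L)%R)%:R * (Q s)%:R + L^-1 * V δ x y s) _) _.
  move=> s; have V0 := V_ge0 x y s dpos.
  have iV : 0 <= L^-1 * V δ x y s by apply: mulr_ge0 => //; rewrite invr_ge0 ltW.
  case: (leP (V δ x y s) L) => h; case: (Q s) => /=; rewrite ?mulr1n ?mulr0n ?mul1r ?mul0r ?add0r //.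
  - by rewrite lerDl.
  - by rewrite mulrC ler_pdivlMr // mul1r ltW.
rewrite ExD ExZ.
have h := @ratio δ dpos hδ n j x y L (fun s => (Q s)%:R) hx hy (fun s => ler0n _ _).
by apply: lerD => //; rewrite mulrC.
Qed.

End Walk.

Unset Implicit Arguments. Set Strict Implicit.

Lemma le_int_nm (R : realType) (D : set R) (f g : R -> \bar R) :
  (forall x, D x -> (0 <= f x)%E) -> (forall x, D x -> (f x <= g x)%E) ->
  (\int[@lebesgue_measure R]_(x in D) f x <= \int[@lebesgue_measure R]_(x in D) g x)%E.
Proof.
move=> f0 fg.
have g0 : forall x, D x -> (0 <= g x)%E by move=> x hx; exact: le_trans (f0 x hx) (fg x hx).
rewrite !ge0_integralE //=.
apply: ereal_sup_le => _ [h /= hh <-]; exists h => //= x.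
apply: le_trans (hh x) _; rewrite /patch; case: ifP => // /set_mem hx; exact: fg.
Qed.

Lemma itv_mem (R : realType) (u v t : R) : (t \in (`]u, v]%classic : set R)) = (u < t <= v).
Proof. by rewrite mem_setE in_itv. Qed.

Lemma dini_sum (R : realType) (mo : R -> \bar R) (b : R) :
  0 < b -> b < 1 ->
  (forall t, 0 <= t -> (0 <= mo t)%E) ->
  (forall t, 0 <= t -> mo t \is a fin_num) ->
  (forall t1 t2, 0 <= t1 -> t1 <= t2 -> (mo t1 <= mo t2)%E) ->
  (exists c : R, 0 < c /\
    (\int[@lebesgue_measure R]_(t in `]0%R, c]) (mo t * (t^-1)%:E) < +oo)%E) ->
  exists c : R, exists B : R, 0 < c /\
    forall n, \sum_(k < n) fine (mo (c * b ^+ k.+1)) <= B.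
Proof.
move=> b0 b1 mo0 mofin momono [c [c0 hI]].
set I := (\int[_]_(t in _) _)%E in hI.
have I0 : (0 <= I)%E.
  apply: integral_ge0 => t /=; rewrite in_itv /= => /andP[t0 _].
  by apply: mule_ge0; [apply: mo0; exact: ltW | rewrite lee_fin invr_ge0 ltW].
have Ifin : I \is a fin_num by rewrite ge0_fin_numE.
exists c, (fine I / (1 - b)); split => // n.
have b1' : 0 < 1 - b by rewrite subr_gt0.
rewrite ler_pdivlMr //.
pose ck k := c * b ^+ k.
have ck0 k : 0 < ck k by rewrite /ck mulr_gt0 // exprn_gt0.
pose coef k := fine (mo (ck k.+1)) / ck k.
have coef0 k : 0 <= coef k.
  by apply: divr_ge0; [rewrite -lee_fin fineK ?mofin ?mo0 // ltW | exact: ltW].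
pose A k := (`]ck k.+1, ck k]%classic : set R).
have ckS k : ck k.+1 = ck k * b by rewrite /ck exprSr mulrA.
have ckle j k : (j <= k)%N -> ck k <= ck j.
  by move=> h; rewrite /ck ler_pM2l // ler_wiXn2l // ?ltW.
have cklt k : ck k.+1 < ck k by rewrite ckS gtr_pMr.
have AD k : A k `<=` `]0%R, c]%classic.
  move=> t; rewrite /A /= !in_itv /= => /andP[h1 h2]; apply/andP; split.
    exact: lt_trans (ck0 _) h1.
  by apply: le_trans h2 _; have := ckle 0%N k (leq0n k); rewrite /ck expr0 mulr1.
have mA k : measurable (A k) by exact: measurable_itv.
pose f1 t := (\sum_(k < n) (coef k * \1_(A k) t)%:E)%E.
have int1 : (\int[@lebesgue_measure R]_(t in `]0%R, c]) f1 t =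
    (\sum_(k < n) (fine (mo (ck k.+1)) * (1 - b)))%:E)%E.
  rewrite /f1 ge0_integral_sum //; first last.
  - by move=> k t _; rewrite lee_fin mulr_ge0.
  - move=> k; apply/measurable_realfun.measurable_EFinP; apply: measurable_realfun.measurable_funM.
      exact: measurable_cst.
    by apply: measurable_realfun.measurable_indic; exact: measurable_itv.
  rewrite -sumEFin; apply: eq_bigr => k _.
  have h := @integralZl_indic _ _ _ (@lebesgue_measure R) `]0%R, c]%classic (measurable_itv _)
    (fun _ => A k) (coef k).
  rewrite /= in h; rewrite h; last 2 first.
    - by move=> h'; have := coef0 k; rewrite ltNge coef0 in h'.
    - exact: mA.
  rewrite integral_indic //; last exact: measurable_itv.
  rewrite setIidl; last exact: AD.
  have hA : (@lebesgue_measure R (A k) = (ck k - ck k.+1)%:E)%E.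
    by rewrite /A lebesgue_measure_itv /= lte_fin cklt.
  transitivity ((coef k)%:E * (ck k - ck k.+1)%:E)%E; first by congr (_ * _)%E; exact: hA.
  rewrite -EFinM /coef; congr (_%:E).
  rewrite ckS; field.
  by rewrite gt_eqF.
have int2 : (\int[@lebesgue_measure R]_(t in `]0%R, c]) f1 t <= I)%E.
  rewrite /I; apply: le_int_nm.
  - move=> t _; rewrite /f1 sumEFin lee_fin; apply: sumr_ge0 => k _.
    by apply: mulr_ge0 => //; rewrite indicE ler0n.
  - move=> t; rewrite /= in_itv /= => /andP[t0 tc].
    rewrite /f1 sumEFin -(fineK (mofin t (ltW t0))) -EFinM lee_fin.
    have fmt : 0 <= fine (mo t) by rewrite -lee_fin fineK ?mofin ?mo0 // ltW.
    have g0 : 0 <= fine (mo t) * t^-1 by apply: mulr_ge0 => //; rewrite invr_ge0 ltW.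
    have h1 : forall k, coef k * \1_(A k) t <= (fine (mo t) * t^-1) * \1_(A k) t.
      move=> k; rewrite indicE; case: (boolP (t \in A k)) => htA; last by rewrite !mulr0.
      rewrite !mulr1; move: htA; rewrite /A mem_setE in_itv /= => /andP[h1 h2].
      rewrite /coef; apply: ler_pM.
      - by rewrite -lee_fin fineK ?mofin ?mo0 // ltW.
      - by rewrite invr_ge0 ltW.
      - apply: fine_le; rewrite ?inE ?mofin //; try exact: ltW.
        by apply: momono; exact: ltW.
      - by rewrite lef_pV2 // posrE.
    apply: le_trans (ler_sum _ (fun (k : 'I_n) _ => h1 k)) _.
    rewrite -mulr_sumr; apply: ler_piMr => //.
    have dis : forall i j : nat, (i < j)%N -> t \in A i -> t \in A j -> False.
      move=> i j ij; rewrite /A !mem_setE !in_itv /= => /andP[hi1 hi2] /andP[hj1 hj2].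
      have := ckle i.+1 j ij; lra.
    case: (pselect (exists k : 'I_n, t \in A k)) => [[k0 hk0]|hno].
      rewrite (bigD1 k0) //= big1 ?addr0 ?indicE ?hk0 //.
      move=> j hj; rewrite indicE; case: (boolP (t \in A j)) => // htj; exfalso.
      case: (ltngtP j k0) => [h|h|h].
      + exact: dis h htj hk0.
      + exact: dis h hk0 htj.
      + by move: hj; rewrite (val_inj h) eqxx.
    rewrite big1 // => j _; rewrite indicE; case: (boolP (t \in A j)) => // htj.
    by exfalso; apply: hno; exists j.
rewrite int1 -(fineK Ifin) lee_fin in int2.
by rewrite mulr_suml.
Qed.


Lemma Ex_paths (R : realType) (E : finType) (K : Type) (w : E -> K -> K) (p : E -> K -> R)
  n z (f : seq E -> R) :
  Ex w p n z f = \sum_(s <- paths E n) cylP w p z s * f s.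
Proof.
elim: n z f => [|n IH] z f /=; first by rewrite big_cons big_nil /= mul1r addr0.
rewrite big_allpairs_dep /=; apply: eq_bigr => e _.
rewrite IH mulr_sumr; apply: eq_bigr => t _.
by rewrite /= mulrA.
Qed.

Theorem lemma6 (R : realType) (N : nat) (E : finType) (ini ter : E -> 'I_N)
  (K : Type) (d : K -> K -> R) (Kp : 'I_N -> set K)
  (w : E -> K -> K) (p : E -> K -> R) (a : R) :
  is_CMS ini ter d Kp w p a ->
  (forall e, dini_continuous d (Kp (ini e)) (p e)) ->
  (exists delta : R, 0 < delta /\ forall e y, Kp (ini e) y -> delta <= p e y) ->
  forall (xs : 'I_N -> K), (forall i, Kp i (xs i)) ->
  forall (x : K) (m : int), m <= 0 ->
  forall P : K -> set (Sigma E) -> \bar R,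
    (forall y, is_probability_on (A_sigma m) (P y)) ->
    (forall y (s : seq E), (0 < size s)%N -> P y (cyl m s) = (cylP w p y s)%:E) ->
    abs_continuous_on (A_sigma m) (P x)
      (fun A => ((N%:R)^-1)%:E * \sum_(i < N) P (xs i) A)%E.
Proof.
move=> HC Hdini [δ [δ0 hδ]] xs hxs x m hm P HP Hcyl.
have [j hx] : exists j, Kp j x by case: HC => _ [_ _ h _] _ _ _; apply: h.
set y := xs j.
have hy : Kp j y := hxs j.
have [e0 _] : exists e0 : E, True.
  case: (pickP (fun _ : E => true)) => [e _|h]; first by exists e.
  have := p_sum HC x; rewrite big1 => [/esym/eqP|e _]; first by rewrite oner_eq0.
  by have := h e.
have PU : forall z n Q, (0 < n)%N -> P z (U m n Q) = (Ex w p n z (fun s => (Q s)%:R))%:E.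
  move=> z n Q n0; rewrite (P_U e0 (HP z)) // Ex_paths -sumEFin big_mkcond /=.
  apply: eq_big_seq => s hs; rewrite Hcyl; last by move: hs; rewrite mem_paths => /eqP ->.
  by case: (Q s); rewrite ?mulr1n ?mulr0n ?mulr1 ?mulr0.
move=> A SA hA.
have PyA : P y A = 0%E.
  have Ninv : (0 < (N%:R^-1 : R)).
    by rewrite invr_gt0 ltr0n; apply: leq_ltn_trans (ltn_ord j).
  have S0 : (\sum_(i < N) P (xs i) A = 0)%E.
    by move/eqP: hA; rewrite mule_eq0 eqe gt_eqF //= => /eqP.
  apply/eqP; rewrite eq_le; apply/andP; split; last by case: (HP y) => _ + _ _; apply.
  rewrite -S0 (bigD1 j) //= leeDl //; apply: sume_ge0 => i _.
  by case: (HP (xs i)) => _ + _ _; apply.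
apply: (@abscont_gen R E e0 m (P x) (P y) (HP x) (HP y) (Alg m) (setring_Alg E m) (AlgT E m) (@cyl_Alg E m) (@Alg_sub E m e0) _ A SA PyA).
move=> eps eps0.
have a0 := a_ge0 HC.
have a1 : a < 1 by case: HC => _ _ _ _ [/andP[_ h] _].
pose b := (1 + a) / 2.
have b0 : 0 < b by rewrite /b; lra.
have b1 : b < 1 by rewrite /b; lra.
have ab : a < b by rewrite /b; lra.
have hD : forall e, exists cB : R * R, 0 < cB.1 /\
    forall n, \sum_(k < n) fine (modulus d (Kp (ini e)) (p e) (cB.1 * b ^+ k.+1)) <= cB.2.
  move=> e; have [c [B [c0 hB]]] := @dini_sum R (modulus d (Kp (ini e)) (p e)) b b0 b1
    (fun t t0 => mod_ge0 HC e t0) (fun t t0 => mod_fin HC e t0)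
    (fun t1 t2 _ h => mod_mono ini d Kp p e h) (Hdini e).
  by exists (c, B).
have [f hf] := choice hD.
pose cmin := (1 + \sum_(e : E) (f e).1^-1)^-1.
have S0 : 0 <= \sum_(e : E) (f e).1^-1.
  by apply: sumr_ge0 => e _; rewrite invr_ge0 ltW // (hf e).1.
have cmin0 : 0 < cmin by rewrite /cmin invr_gt0; lra.
have cminle : forall e, cmin <= (f e).1.
  move=> e; have fe0 := (hf e).1.
  rewrite /cmin -[X in _ <= X]invrK lef_pV2 ?posrE ?invr_gt0 //; last lra.
  rewrite (bigD1 e) //=.
  have : 0 <= \sum_(i | i != e) (f i).1^-1.
    by apply: sumr_ge0 => i _; rewrite invr_ge0 ltW // (hf i).1.
  lra.
pose τ := fun k => cmin * b ^+ k.+1.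
have τ0 : forall k, 0 < τ k by move=> k; rewrite /τ mulr_gt0 // exprn_gt0.
pose M1 := \sum_(e : E) (f e).2.
have hM1 : forall n, \sum_(k < n) Phi ini d Kp p (τ k) <= M1.
  move=> n; rewrite /Phi exchange_big /=; apply: ler_sum => e _.
  apply: le_trans ((hf e).2 n); apply: ler_sum => k _.
  apply: (phi_mono HC e (ltW (τ0 k))).
  by rewrite /τ ler_wpM2r // ?exprn_ge0 ?ltW.
pose q := a / b.
have q0 : 0 <= q by rewrite /q divr_ge0 // ltW.
have q1 : q < 1 by rewrite /q ltr_pdivrMr // mul1r.
have geo : forall n, \sum_(k < n) q ^+ k <= (1 - q)^-1.
  move=> n; have h : (\sum_(k < n) q ^+ k) * (1 - q) = 1 - q ^+ n.
    elim: n => [|n IH]; first by rewrite big_ord0 mul0r expr0 subrr.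
    rewrite big_ord_recr /= mulrDl IH exprSr; ring.
  rewrite -[X in _ <= X]div1r ler_pdivlMr ?subr_gt0 // h.
  have := exprn_ge0 n q0; lra.
pose M2 := (cmin * b)^-1 * (1 - q)^-1.
have hM2 : forall n, \sum_(k < n) (a ^+ k / τ k) <= M2.
  move=> n; rewrite (eq_bigr (fun k : 'I_n => (cmin * b)^-1 * q ^+ k)); last first.
    move=> k _; rewrite /τ /q exprSr (expr_div_n a b k).
    have bk : b ^+ k != 0 by rewrite expf_neq0 // gt_eqF.
    move: bk; set u := a ^+ k; set v := b ^+ k => bk; field.
    by rewrite bk !gt_eqF.
  rewrite -mulr_sumr; apply: ler_wpM2l; last exact: geo.
  by rewrite invr_ge0 ltW // mulr_gt0.
pose Mt := M1 + d x y * M2.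
have hEV : forall n, δ * Ex w p n x (V w p δ x y) <= Mt.
  move=> n; apply: le_trans (Vbound HC δ0 n hx hy τ0) _.
  apply: lerD; first exact: hM1.
  by apply: ler_wpM2l; [exact: (d_ge0 HC) | exact: hM2].
pose L := `|Mt| / (δ * eps) + 1.
have L0 : 0 < L.
  rewrite /L; have : 0 <= `|Mt| / (δ * eps) by rewrite divr_ge0 // ltW // mulr_gt0.
  lra.
exists (expR L); split; first exact: expR_ge0.
move=> B [n [Q [n0 ->]]].
rewrite !PU // -EFinM -EFinD lee_fin.
apply: le_trans (main_bound HC δ0 hδ n Q hx hy L0) _.
apply: lerD => //.
set EV := Ex w p n x (V w p δ x y).
have h1 : δ * EV <= `|Mt| by apply: le_trans (hEV n) (ler_norm _).
have h3 : EV <= `|Mt| / δ by rewrite ler_pdivlMr // mulrC.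
rewrite ler_pdivrMr //.
have h2 : eps * L = `|Mt| / δ + eps.
  rewrite /L; field.
  by rewrite ?mulf_neq0 ?gt_eqF.
rewrite h2; lra.
Qed.
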